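(* Let $A$ be a finite subset of an abelian group. Then $$\mathsf{E}(A+A)\geq |A-A|^{-1}\,|A\times A+\Delta(A)|^2\geq |A|^2\max\{|A-A|,|A+A|\},$$ $$\mathsf{E}(A-A)\geq |A-A|^{-1}\,|A\times A-\Delta(A)|^2\geq |A|^2|A-A|,$$ and $$\mathsf{E}(A\pm A)\geq \frac{|A|^{12}}{\mathsf{E}_3(A)^2\,|A-A|},$$ the last inequality holding both for $A+A$ and for $A-A$.
   Context: For a finite set $X$ in an abelian group (written additively), $\mathsf{E}(X)$ is the additive energy, the number of solutions of $x_1-x_2=x_3-x_4$ with $x_i\in X$. For $y$ in the group let $r_{A-A}(y)=|\{(a,b)\in A\times A:a-b=y\}|$ and $\mathsf{E}_3(A)=\sum_y r_{A-A}(y)^3$. $A\pm A=\{a\pm b: a,b\in A\}$. $\Delta(A)=\{(a,a):a\in A\}$, $A\times A+\Delta(A)=\{(a_1+a,a_2+a):a,a_1,a_2\in A\}$ and $A\times A-\Delta(A)=\{(a_1-a,a_2-a):a,a_1,a_2\in A\}$. *)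

(* Defs.v *)
From HB Require Import structures.
From mathcomp Require Import all_boot all_order all_algebra.
From mathcomp Require Import finmap.
Set Implicit Arguments. Unset Strict Implicit. Unset Printing Implicit Defensive.
Import Order.TTheory GRing.Theory Num.Theory.
Local Open Scope ring_scope.
Local Open Scope fset_scope.

Definition sumset (G : zmodType) (A B : {fset G}) : {fset G} :=
  [fset (x.1 + x.2)%R | x : G * G in A `*` B].
Definition diffset (G : zmodType) (A B : {fset G}) : {fset G} :=
  [fset (x.1 - x.2)%R | x : G * G in A `*` B].

Definition energy (G : zmodType) (X : {fset G}) : nat :=
  (\sum_(x1 <- X) \sum_(x2 <- X) \sum_(x3 <- X) \sum_(x4 <- X)
     ((x1 - x2 == x3 - x4)%R : nat))%N.

Definition rdiff (G : zmodType) (A : {fset G}) (y : G) : nat :=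
  (\sum_(a <- A) \sum_(b <- A) ((a - b == y)%R : nat))%N.

(* E_3(A) = sum_y r_{A-A}(y)^3; r vanishes outside A - A *)
Definition energy3 (G : zmodType) (A : {fset G}) : nat :=
  (\sum_(y <- diffset A A) rdiff A y ^ 3)%N.

Definition prod_plus_diag (G : zmodType) (A : {fset G}) : {fset G * G} :=
  [fset ((x.1.1 + x.2)%R, (x.1.2 + x.2)%R) | x : (G * G) * G in (A `*` A) `*` A].
Definition prod_minus_diag (G : zmodType) (A : {fset G}) : {fset G * G} :=
  [fset ((x.1.1 - x.2)%R, (x.1.2 - x.2)%R) | x : (G * G) * G in (A `*` A) `*` A].

(* Main.v *)
Require Import Defs.
From HB Require Import structures.
From mathcomp Require Import all_boot all_order all_algebra.
From mathcomp Require Import finmap.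
From mathcomp Require Import zify.
Import Order.TTheory GRing.Theory Num.Theory.
Set Implicit Arguments. Unset Strict Implicit. Unset Printing Implicit Defensive.

Lemma sum_constn (T : Type) (s : seq T) (c : nat) : \sum_(i <- s) c = size s * c.
Proof. elim: s => [|x s IH]; by rewrite ?big_nil ?big_cons ?IH. Qed.

Lemma sum_eq1 (T : eqType) (s : seq T) (u : T) (g : T -> nat) :
  uniq s -> \sum_(x <- s) (u == x) * g x = (u \in s) * g u.
Proof.
elim: s => [|y s IH] /=; first by rewrite big_nil.
move=> /andP[ys us]; rewrite big_cons IH // in_cons.
case: eqP => [->|_] /=; last by [].
by rewrite (negbTE ys) /=; lia.
Qed.

Lemma sum_eq1' (T : eqType) (s : seq T) (u : T) :
  uniq s -> \sum_(x <- s) (u == x : nat) = (u \in s).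
Proof.
move=> us; have := sum_eq1 u (fun _ => 1) us; rewrite muln1 => <-.
by apply: eq_bigr => x _; rewrite muln1.
Qed.

Lemma prod_sum (I J : Type) (s : seq I) (t : seq J) F H :
  (\sum_(i <- s) F i) * (\sum_(j <- t) H j) = \sum_(i <- s) \sum_(j <- t) F i * H j.
Proof. rewrite big_distrl; apply: eq_bigr => i _; by rewrite big_distrr. Qed.

Lemma sum_prod (I J K : Type) (rD : seq K) (s : seq I) (t : seq J) F H :
  \sum_(y <- rD) (\sum_(i <- s) F i y) * (\sum_(j <- t) H j y) =
  \sum_(i <- s) \sum_(j <- t) \sum_(y <- rD) F i y * H j y.
Proof.
under eq_bigr do rewrite prod_sum.
rewrite exchange_big; apply: eq_bigr => i _; by rewrite exchange_big.
Qed.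

Lemma cs (T : Type) (s : seq T) (f : T -> nat) :
  (\sum_(i <- s) f i) ^ 2 <= size s * \sum_(i <- s) f i ^ 2.
Proof.
rewrite -(leq_pmul2l (isT : 0 < 2)) -mulnn prod_sum big_distrr /=.
have -> : 2 * (size s * \sum_(i <- s) f i ^ 2) =
   \sum_(i <- s) \sum_(j <- s) (f i ^ 2 + f j ^ 2).
  under [RHS]eq_bigr do rewrite big_split /= sum_constn.
  rewrite big_split /= sum_constn -big_distrr /=. lia.
apply: leq_sum => i _; rewrite big_distrr; apply: leq_sum => j _ /=.
have [H _] := nat_Cauchy (f i) (f j); move: H; lia.
Qed.

Local Open Scope fset_scope.


Section S.
Variable G : zmodType.

Lemma sub_sum (Q : {fset G * G}) (X : {fset G}) (g : G * G -> nat) :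
  (forall p, p \in Q -> p.1 \in X /\ p.2 \in X) ->
  \sum_(p <- Q) g p <= \sum_(s <- X) \sum_(t <- X) g (s, t).
Proof.
move=> QX.
have -> : \sum_(p <- Q) g p =
   \sum_(p <- Q) \sum_(s <- X) (p.1 == s) * \sum_(t <- X) (p.2 == t) * g (s, t).
  rewrite big_seq_cond [RHS]big_seq_cond; apply: eq_bigr => p /andP[pQ _].
  have [h1 h2] := QX p pQ.
  under eq_bigr => s _ do rewrite (sum_eq1 _ (fun t => g (s, t)) (fset_uniq X)) h2 mul1n.
  by rewrite (sum_eq1 _ (fun s => g (s, p.2)) (fset_uniq X)) h1 mul1n; case: p {pQ h1 h2}.
rewrite exchange_big; apply: leq_sum => s _.
under eq_bigr do rewrite big_distrr.
rewrite exchange_big; apply: leq_sum => t _ /=.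
under eq_bigr do rewrite mulnA.
rewrite -big_distrl /= -[X in _ <= X]mul1n; apply: leq_mul => //.
have -> : \sum_(p <- Q) (p.1 == s) * (p.2 == t) = \sum_(p <- Q) ((s, t) == p : nat).
  by apply: eq_bigr => -[x y] _; rewrite xpair_eqE mulnb /= (eq_sym x) (eq_sym y).
by rewrite sum_eq1' ?fset_uniq //; case: (_ \in _).
Qed.

Lemma energy_bound (X D : {fset G}) (Q : {fset G * G}) :
  (forall p, p \in Q -> [/\ p.1 \in X, p.2 \in X & (p.1 - p.2)%R \in D]) ->
  #|` Q| ^ 2 <= #|` D| * energy X.
Proof.
move=> HQ.
have h1 : #|` Q| <= \sum_(y <- D) rdiff X y.
  rewrite -sum1_size.
  apply: (@leq_trans (\sum_(p <- Q) \sum_(y <- D) ((p.1 - p.2)%R == y : nat))).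
    rewrite big_seq_cond [X in _ <= X]big_seq_cond; apply: leq_sum => p /andP[pQ _].
    by rewrite sum_eq1' ?fset_uniq //; have [_ _ ->] := HQ p pQ.
  rewrite exchange_big; apply: leq_sum => y _.
  by apply: (sub_sum (fun p => ((p.1 - p.2)%R == y : nat))) => p /HQ[].
have h2 : \sum_(y <- D) rdiff X y ^ 2 <= energy X.
  under eq_bigr do rewrite -mulnn /rdiff.
  rewrite sum_prod.
  rewrite /energy; apply: leq_sum => x1 _.
  rewrite [X in _ <= X]exchange_big; apply: leq_sum => x3 _.
  rewrite sum_prod; apply: leq_sum => x2 _; apply: leq_sum => x4 _.
  under eq_bigr do rewrite mulnC.
  rewrite (sum_eq1 _ (fun y => ((x1 - x2)%R == y : nat)) (fset_uniq D)).
  by case: (_ \in _); rewrite ?mul1n ?mul0n // eq_sym.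
apply: (@leq_trans ((\sum_(y <- D) rdiff X y) ^ 2)); first by rewrite leq_sqr.
by apply: leq_trans (cs _ _) _; rewrite leq_mul2l h2 orbT.
Qed.

End S.


Section S.
Variable G : zmodType.

Lemma inj_bound (Q : {fset G * G}) (s t : seq G) (f : G -> G -> G * G) :
  uniq s -> uniq t -> (forall x y, x \in s -> y \in t -> f x y \in Q) ->
  (forall x1 y1 x2 y2, x1 \in s -> y1 \in t -> x2 \in s -> y2 \in t ->
     f x1 y1 = f x2 y2 -> x1 = x2 /\ y1 = y2) ->
  size s * size t <= #|` Q|.
Proof.
move=> us ut fQ finj; rewrite -(size_allpairs f); apply: uniq_leq_size.
  apply: allpairs_uniq => // -[x1 y1] [x2 y2] /allpairsP[[a b] [/= ha hb [-> ->]]].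
  move=> /allpairsP[[c d] [/= hc hd [-> ->]]] /= E.
  by have [-> ->] := finj _ _ _ _ ha hb hc hd E.
by move=> z /allpairsP[[a b] [/= ha hb ->]]; apply: fQ.
Qed.

Definition rep (A : {fset G}) (F : G -> G -> G) (y : G) : G * G :=
  head (0, 0)%R [seq x <- enum_fset (A `*` A) | F x.1 x.2 == y].

Lemma rep_spec (A : {fset G}) (F : G -> G -> G) (y : G) :
  y \in [fset F x.1 x.2 | x : G * G in A `*` A] ->
  [/\ (rep A F y).1 \in A, (rep A F y).2 \in A & F (rep A F y).1 (rep A F y).2 = y].
Proof.
move=> /imfsetP[x /= xA ->].
rewrite /rep.
have : x \in [seq x0 <- enum_fset (A `*` A) | F x0.1 x0.2 == F x.1 x.2].
  by rewrite mem_filter eqxx.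
case Es: [seq _ <- _ | _] => [|z r] // _ /=.
have : z \in [seq x0 <- enum_fset (A `*` A) | F x0.1 x0.2 == F x.1 x.2].
  by rewrite Es mem_head.
rewrite mem_filter => /andP[/eqP -> zA].
by move: zA; rewrite in_fsetM => /andP[-> ->].
Qed.

End S.


Section S.
Variable G : zmodType.
Variable A : {fset G}.
Variable h : G -> G -> G.

Definition Lh := [seq (h x.1 a, h x.2 a) |
  x <- [seq (a1, a2) | a1 <- enum_fset A, a2 <- enum_fset A], a <- enum_fset A].

Lemma sumL (K : G * G -> nat) : \sum_(u <- Lh) K u =
  \sum_(a1 <- A) \sum_(a2 <- A) \sum_(a <- A) K (h a1 a, h a2 a).
Proof.
rewrite /Lh big_allpairs_dep /=.
by rewrite (big_allpairs_dep (F := fun x => \sum_(a <- A) K (h x.1 a, h x.2 a))).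
Qed.

Lemma memL u : u \in Lh -> exists a1 a2 a, [/\ a1 \in A, a2 \in A, a \in A & u = (h a1 a, h a2 a)].
Proof.
move=> /allpairsP[[x a] [/= /allpairsP[[a1 a2] [/= h1 h2 ->]] ha ->]].
by exists a1, a2, a.
Qed.

Lemma sizeL : size Lh = #|` A| ^ 3.
Proof. by rewrite /Lh !size_allpairs !expnS expn0 muln1 mulnA. Qed.

Lemma F3 (Q : {fset G * G}) :
  (forall a1 a2 a, a1 \in A -> a2 \in A -> a \in A -> (h a1 a, h a2 a) \in Q) ->
  (forall a b, a \in A -> b \in A ->
     \sum_(a1 <- A) \sum_(b1 <- A) (h a1 a == h b1 b : nat) = rdiff A (a - b)%R) ->
  #|` A| ^ 6 <= #|` Q| * energy3 A.
Proof.
move=> HQ Hr.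
pose c p := \sum_(u <- Lh) (u == p : nat).
have e1 : size Lh = \sum_(p <- Q) c p.
  rewrite /c exchange_big -sum1_size big_seq_cond [RHS]big_seq_cond.
  apply: eq_bigr => u /andP[uL _]; rewrite sum_eq1' ?fset_uniq //.
  by have [a1 [a2 [a [? ? ? ->]]]] := memL uL; rewrite HQ.
have e3 : \sum_(p <- Q) c p ^ 2 <= \sum_(u <- Lh) \sum_(v <- Lh) (u == v : nat).
  under eq_bigr do rewrite -mulnn.
  rewrite /c sum_prod; apply: leq_sum => u _; apply: leq_sum => v _.
  rewrite (sum_eq1 _ (fun p => (v == p : nat)) (fset_uniq Q)).
  by case: (_ \in _); rewrite ?mul1n ?mul0n // eq_sym.
have e4 : \sum_(u <- Lh) \sum_(v <- Lh) (u == v : nat) = energy3 A.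
  rewrite sumL.
  have inner : forall a1 a2 a, \sum_(v <- Lh) ((h a1 a, h a2 a) == v : nat) =
     \sum_(b <- A) (\sum_(b1 <- A) (h a1 a == h b1 b : nat)) *
                   (\sum_(b2 <- A) (h a2 a == h b2 b : nat)).
    move=> a1 a2 a; rewrite sumL.
    under eq_bigr do under eq_bigr do under eq_bigr do rewrite xpair_eqE -mulnb.
    under eq_bigr do rewrite exchange_big.
    by rewrite exchange_big; apply: eq_bigr => b _; rewrite prod_sum.
  under eq_bigr do under eq_bigr do under eq_bigr do rewrite inner.
  under eq_bigr do rewrite exchange_big.
  under eq_bigr do under eq_bigr do rewrite exchange_big.
  rewrite exchange_big.
  under eq_bigr do rewrite exchange_big.
  transitivity (\sum_(a <- A) \sum_(b <- A) rdiff A (a - b)%R * rdiff A (a - b)%R).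
    rewrite big_seq [RHS]big_seq; apply: eq_bigr => a aA.
    rewrite big_seq [RHS]big_seq; apply: eq_bigr => b bA.
    by rewrite -prod_sum Hr.
  rewrite /energy3.
  transitivity (\sum_(a <- A) \sum_(b <- A) \sum_(y <- diffset A A)
       ((a - b)%R == y) * (rdiff A y * rdiff A y)).
    rewrite big_seq [RHS]big_seq; apply: eq_bigr => a aA.
    rewrite big_seq [RHS]big_seq; apply: eq_bigr => b bA.
    rewrite (sum_eq1 _ (fun y => rdiff A y * rdiff A y) (fset_uniq _)).
    suff -> : (a - b)%R \in diffset A A by rewrite mul1n.
    by apply/imfsetP; exists (a, b) => //; rewrite in_fsetM aA bA.
  under eq_bigr do rewrite exchange_big. rewrite exchange_big.
  apply: eq_bigr => y _.
  rewrite expnS -mulnn; set r := (rdiff A y * rdiff A y); rewrite /rdiff big_distrl /=.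
  by apply: eq_bigr => a _; rewrite big_distrl.
have : #|` A| ^ 6 = (size Lh) ^ 2 by rewrite sizeL -expnM.
move=> ->; rewrite e1 -e4; apply: leq_trans (cs _ _) _.
by rewrite leq_mul2l e3 orbT.
Qed.

End S.


Section S.
Variable G : zmodType.
Variable A : {fset G}.

Lemma subDD (a b c : G) : ((a + c) - (b + c) = a - b)%R.
Proof. by rewrite opprD addrACA subrr addr0. Qed.

Lemma subBB (a b c : G) : ((a - c) - (b - c) = a - b)%R.
Proof. by rewrite opprB addrA subrK. Qed.

Lemma in_sum (a b : G) : a \in A -> b \in A -> (a + b)%R \in sumset A A.
Proof. by move=> ha hb; apply/imfsetP; exists (a, b) => //; rewrite in_fsetM ha hb. Qed.

Lemma in_diff (a b : G) : a \in A -> b \in A -> (a - b)%R \in diffset A A.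
Proof. by move=> ha hb; apply/imfsetP; exists (a, b) => //; rewrite in_fsetM ha hb. Qed.

Lemma in_P (a1 a2 a : G) : a1 \in A -> a2 \in A -> a \in A ->
  ((a1 + a)%R, (a2 + a)%R) \in prod_plus_diag A.
Proof.
by move=> h1 h2 h; apply/imfsetP; exists ((a1, a2), a) => //; rewrite !in_fsetM /= h1 h2 h.
Qed.

Lemma in_Pm (a1 a2 a : G) : a1 \in A -> a2 \in A -> a \in A ->
  ((a1 - a)%R, (a2 - a)%R) \in prod_minus_diag A.
Proof.
by move=> h1 h2 h; apply/imfsetP; exists ((a1, a2), a) => //; rewrite !in_fsetM /= h1 h2 h.
Qed.

Lemma P_spec p : p \in prod_plus_diag A -> exists a1 a2 a,
  [/\ a1 \in A, a2 \in A, a \in A & p = ((a1 + a)%R, (a2 + a)%R)].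
Proof.
move=> /imfsetP[[[a1 a2] a]]; rewrite !in_fsetM /= => /andP[/andP[h1 h2] h] ->.
by exists a1, a2, a.
Qed.

Lemma Pm_spec p : p \in prod_minus_diag A -> exists a1 a2 a,
  [/\ a1 \in A, a2 \in A, a \in A & p = ((a1 - a)%R, (a2 - a)%R)].
Proof.
move=> /imfsetP[[[a1 a2] a]]; rewrite !in_fsetM /= => /andP[/andP[h1 h2] h] ->.
by exists a1, a2, a.
Qed.

Lemma fa : #|` prod_plus_diag A| ^ 2 <= #|` diffset A A| * energy (sumset A A).
Proof.
apply: energy_bound => p /P_spec[a1 [a2 [a [h1 h2 h ->]]]] /=.
by rewrite !in_sum // subDD in_diff.
Qed.

Lemma fd : #|` prod_minus_diag A| ^ 2 <= #|` diffset A A| * energy (diffset A A).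
Proof.
apply: energy_bound => p /Pm_spec[a1 [a2 [a [h1 h2 h ->]]]] /=.
by rewrite (in_diff h1 h) (in_diff h2 h) subBB in_diff.
Qed.

Definition repD := rep A (fun a b => (a - b)%R).
Definition repS := rep A (fun a b => (a + b)%R).

Lemma repD_spec y : y \in diffset A A ->
  [/\ (repD y).1 \in A, (repD y).2 \in A & ((repD y).1 - (repD y).2)%R = y].
Proof. exact: rep_spec. Qed.

Lemma repS_spec y : y \in sumset A A ->
  [/\ (repS y).1 \in A, (repS y).2 \in A & ((repS y).1 + (repS y).2)%R = y].
Proof. exact: rep_spec. Qed.

Lemma fb : #|` diffset A A| * #|` A| <= #|` prod_plus_diag A|.
Proof.
apply: (inj_bound (f := fun y a => (((repD y).1 + a)%R, ((repD y).2 + a)%R))).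
- exact: fset_uniq.
- exact: fset_uniq.
- by move=> y a /repD_spec[h1 h2 _] ha; apply: in_P.
move=> y1 x1 y2 x2 /repD_spec[_ _ e1] _ /repD_spec[_ _ e2] _ [E1 E2].
have ey : y1 = y2 by rewrite -e1 -e2 -(subDD _ _ x1) E1 E2 subDD.
by split => //; subst y2; move: E1 => /addrI.
Qed.

Lemma fc : #|` sumset A A| * #|` A| <= #|` prod_plus_diag A|.
Proof.
apply: (inj_bound (f := fun y a => (y, (a + (repS y).2)%R))).
- exact: fset_uniq.
- exact: fset_uniq.
- move=> y a /repS_spec[h1 h2 e] ha.
  by rewrite -{1}e; apply: in_P.
by move=> y1 x1 y2 x2 _ _ _ _ [E1 E2]; subst y2; split => //; move: E2 => /addIr.
Qed.

Lemma fe : #|` diffset A A| * #|` A| <= #|` prod_minus_diag A|.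
Proof.
apply: (inj_bound (f := fun y a => (((repD y).1 - a)%R, ((repD y).2 - a)%R))).
- exact: fset_uniq.
- exact: fset_uniq.
- by move=> y a /repD_spec[h1 h2 _] ha; apply: in_Pm.
move=> y1 x1 y2 x2 /repD_spec[_ _ e1] _ /repD_spec[_ _ e2] _ [E1 E2].
have ey : y1 = y2 by rewrite -e1 -e2 -(subBB _ _ x1) E1 E2 subBB.
by split => //; subst y2; move: E1 => /addrI /oppr_inj.
Qed.

Lemma eqD (a1 a b1 b : G) : (a1 + a == b1 + b)%R = (b1 - a1 == a - b)%R.
Proof.
rewrite -subr_eq0 -[RHS]subr_eq0 -oppr_eq0; congr (_ == 0)%R.
rewrite opprD opprK opprD addrC -!addrA; congr (_ + _)%R. by rewrite opprB addrCA.
Qed.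

Lemma eqB (a1 a b1 b : G) : (a1 - a == b1 - b)%R = (a1 - b1 == a - b)%R.
Proof.
rewrite -subr_eq0 -[RHS]subr_eq0; congr (_ == 0)%R.
by rewrite !opprB addrACA [(- a + _)%R]addrC addrACA.
Qed.

Lemma ff : #|` A| ^ 6 <= #|` prod_plus_diag A| * energy3 A.
Proof.
apply: (F3 (h := fun x y => (x + y)%R)); first by move=> *; apply: in_P.
move=> a b _ _; rewrite exchange_big /rdiff; apply: eq_bigr => b1 _.
apply: eq_bigr => a1 _ /=. exact: (congr1 nat_of_bool (eqD a1 a b1 b)).
Qed.

Lemma fg : #|` A| ^ 6 <= #|` prod_minus_diag A| * energy3 A.
Proof.
apply: (F3 (h := fun x y => (x - y)%R)); first by move=> *; apply: in_Pm.
move=> a b _ _; rewrite /rdiff; apply: eq_bigr => a1 _.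
by apply: eq_bigr => b1 _ /=; rewrite eqB.
Qed.

Lemma fpos : 0 < #|` A| -> 0 < #|` diffset A A|.
Proof.
case E: (enum_fset A) => [|a r] // _.
have aA : a \in A by rewrite -[_ \in A]/(a \in enum_fset A) E mem_head.
have := in_diff aA aA; rewrite -[_ \in diffset A A]/(_ \in enum_fset _).
by case: (enum_fset _).
Qed.

End S.

Unset Implicit Arguments.
Local Open Scope ring_scope.
Local Open Scope fset_scope.

Lemma rat_div (x y z : nat) : (x <= y * z)%N -> (z%:R^-1 * x%:R <= y%:R :> rat).
Proof.
case: z => [|z] h; first by rewrite invr0 mul0r ler0n.
by rewrite mulrC ler_pdivrMr ?ltr0n // -natrM ler_nat.
Qed.

Lemma rat_div2 (x y z : nat) : (0 < z)%N -> (y * z <= x)%N -> (y%:R <= z%:R^-1 * x%:R :> rat).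
Proof.
by move=> hz h; rewrite mulrC ler_pdivlMr ?ltr0n // -natrM ler_nat.
Qed.

Lemma key (n p d e e3 : nat) : (n ^ 6 <= p * e3 -> p ^ 2 <= d * e -> n ^ 12 <= e * (e3 ^ 2 * d))%N.
Proof.
move=> h1 h2; have h3 := leq_mul h1 h1; have h4 := leq_mul h2 (leqnn (e3 ^ 2)).
rewrite -expnD in h3; apply: leq_trans h3 _.
rewrite mulnACA mulnn mulnn; apply: leq_trans h4 _.
by rewrite (mulnC d e) -mulnA (mulnC d (e3 ^ 2)%N).
Qed.

Lemma sq2 (n s d p : nat) : (s * n <= p -> d * n <= p -> n ^ 2 * s * d <= p ^ 2)%N.
Proof.
move=> h1 h2; rewrite -!mulnn; apply: leq_trans (leq_mul h1 h2).
by rewrite [(s * n)%N]mulnC [(d * n)%N]mulnC mulnACA mulnA.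
Qed.

Theorem corollary5p6 (G : zmodType) (A : {fset G}) :
  let nA : rat := (#|` A|)%:R in
  let nD : rat := (#|` diffset A A|)%:R in
  let nS : rat := (#|` sumset A A|)%:R in
  ((energy (sumset A A))%:R >= nD^-1 * (#|` prod_plus_diag A|)%:R ^+ 2 /\
      nD^-1 * (#|` prod_plus_diag A|)%:R ^+ 2 >= nA ^+ 2 * Num.max nD nS) /\
  (
      (energy (diffset A A))%:R >= nD^-1 * (#|` prod_minus_diag A|)%:R ^+ 2 /\
      nD^-1 * (#|` prod_minus_diag A|)%:R ^+ 2 >= nA ^+ 2 * nD) /\
  (
      (energy (sumset A A))%:R >= nA ^+ 12 / ((energy3 A)%:R ^+ 2 * nD) /\
      (energy (diffset A A))%:R >= nA ^+ 12 / ((energy3 A)%:R ^+ 2 * nD)).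
Proof.
move=> nA nD nS; rewrite /nA /nD /nS.
have ha := fa A; have hb := fb A; have hc := fc A; have hd := fd A.
have he := fe A; have hf := ff A; have hg := fg A.
set d := #|` diffset A A| in ha hb hd he *.
set s := #|` sumset A A| in hc *.
set p := #|` prod_plus_diag A| in ha hb hc hf *.
set q := #|` prod_minus_diag A| in hd he hg *.
set e3 := energy3 A in hf hg *.
have [n0|npos] := posnP #|` A|.
  rewrite n0 expr0n /= !mul0r !ler0n -!natrX.
  have pos x y : (0 : rat) <= y%:R^-1 * x%:R by rewrite mulr_ge0 ?invr_ge0 ?ler0n.
  split; [split|split; [split|]] => //; by [apply: rat_div; rewrite mulnC | exact: pos].
have hd0 : (0 < d)%N by apply: fpos.
set n := #|` A| in npos hb hc he hf hg *.
have he3 : (0 < e3)%N.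
  rewrite lt0n; apply/negP => /eqP E; move: hf; rewrite E muln0 leqn0 expn_eq0; by case: (n) npos.
rewrite -!natrX; split; [split|split; [split|split]].
- apply: rat_div; rewrite mulnC; exact: ha.
- have [hds|hds] := leqP d s.
    rewrite max_r ?ler_nat // -!natrM; apply: rat_div2 => //.
    exact: (sq2 _ _ _ _ hc hb).
  rewrite max_l; last by rewrite ler_nat ltnW.
  rewrite -!natrM; apply: rat_div2 => //.
  exact: (sq2 _ _ _ _ hb hb).
- apply: rat_div; rewrite mulnC; exact: hd.
- rewrite -!natrM; apply: rat_div2 => //; exact: (sq2 _ _ _ _ he he).
- rewrite ler_pdivrMr; last by rewrite mulr_gt0 ?ltr0n ?expn_gt0 ?he3.
  rewrite -!natrM ler_nat.
  exact: key hf ha.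
- rewrite ler_pdivrMr; last by rewrite mulr_gt0 ?ltr0n ?expn_gt0 ?he3.
  rewrite -!natrM ler_nat.
  exact: key hg hd.
Qed.
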